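(* Let $\mathcal X=\mathcal X_1\times\cdots\times\mathcal X_b$, $\mathcal X_i=\mathbb R^{m_i\times n_i}$ with trace inner product and norms $\|\cdot\|_{(i)}$ (dual $\|\cdot\|_{(i)\star}$), $f$ continuously differentiable with $f\ge f^\star$, $\mathcal D$ a distribution on subsets of $[b]$, and assume constants $L^0_{i,S},L^1_{i,S}\ge0$ exist such that for all $S\in\operatorname{supp}(\mathcal D)$, $X\in\mathcal X$ and $\Gamma$ with $\Gamma_i=0$ for $i\notin S$: $f(X+\Gamma)-f(X)-\langle\nabla f(X),\Gamma\rangle\le\sum_{i\in S}\frac{L^0_{i,S}+L^1_{i,S}\|\nabla_if(X)\|_{(i)\star}}2\|\Gamma_i\|_{(i)}^2$. Let $S\in\operatorname{supp}(\mathcal D)$. Then for any $x_i>0$, $i\in[b]$, and all $X\in\mathcal X$, $$\sum_{i\in S}x_i\|\nabla_if(X)\|_{(i)\star}\le4\max_{i\in S}(x_iL^1_{i,S})\,(f(X)-f^\star)+\sum_{i\in S}\frac{x_iL^0_{i,S}}{L^1_{i,S}}.$$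
   Context: $\operatorname{supp}(\mathcal D)$ is the set of subsets of $[b]$ with positive probability under $\mathcal D$. *)

(* Defs.v *)
From HB Require Import structures.
From mathcomp Require Import all_boot all_order all_algebra.
From mathcomp Require Import classical_sets reals.
Set Implicit Arguments. Unset Strict Implicit. Unset Printing Implicit Defensive.
Import Order.TTheory GRing.Theory Num.Theory.
Local Open Scope ring_scope.

Definition blocks (R : realType) (b : nat) (m n : 'I_b -> nat) :=
  forall i : 'I_b, 'M[R]_(m i, n i).

Section Blocks.
Variables (R : realType) (b : nat) (m n : 'I_b -> nat).
Local Notation X := (blocks R m n).

Definition badd (A B : X) : X := fun i => A i + B i.
Definition bsub (A B : X) : X := fun i => A i - B i.

Definition mxinner (p q : nat) (A B : 'M[R]_(p, q)) : R := \tr (A^T *m B).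

Definition binner (A B : X) : R := \sum_(i < b) mxinner (A i) (B i).

(* an auxiliary reference norm on X (entrywise l1); used only to express
   differentiability / continuity (all norms on X are equivalent). *)
Definition bl1 (A : X) : R :=
  \sum_(i < b) \sum_(j < m i) \sum_(k < n i) `|A i j k|.

Definition has_gradient (f : X -> R) (g : X -> X) : Prop :=
  forall x : X, forall eps : R, 0 < eps -> exists2 delta : R, 0 < delta &
    forall h : X, bl1 h < delta ->
      `|f (badd x h) - f x - binner (g x) h| <= eps * bl1 h.

Definition bcontinuous (g : X -> X) : Prop :=
  forall x : X, forall eps : R, 0 < eps -> exists2 delta : R, 0 < delta &
    forall y : X, bl1 (bsub y x) < delta -> bl1 (bsub (g y) (g x)) < eps.

Definition C1_with_gradient (f : X -> R) (g : X -> X) : Prop :=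
  has_gradient f g /\ bcontinuous g.
End Blocks.

Definition is_norm (R : realType) (p q : nat) (N : 'M[R]_(p, q) -> R) : Prop :=
  [/\ forall A, 0 <= N A,
      forall A, N A = 0 -> A = 0,
      forall (c : R) A, N (c *: A) = `|c| * N A &
      forall A B, N (A + B) <= N A + N B].

Definition dual_norm (R : realType) (p q : nat) (N : 'M[R]_(p, q) -> R)
  (G : 'M[R]_(p, q)) : R :=
  sup [set r : R | exists D : 'M[R]_(p, q), N D <= 1 /\ r = mxinner G D].

Definition is_distribution (R : realType) (b : nat) (D : {set 'I_b} -> R) : Prop :=
  (forall S, 0 <= D S) /\ \sum_(S : {set 'I_b}) D S = 1.

Definition in_supp (R : realType) (b : nat) (D : {set 'I_b} -> R) (S : {set 'I_b}) : Prop :=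
  0 < D S.

(* Main.v *)
Require Import Defs.
From HB Require Import structures.
From mathcomp Require Import all_boot all_order all_algebra.
From mathcomp Require Import classical_sets reals boolp lra ring.
Import Order.TTheory GRing.Theory Num.Theory.
Local Open Scope ring_scope.
Local Set Implicit Arguments.

Lemma per_i (R : realType) (y L0 L1 nu a d : R) :
  0 < y -> 0 <= L0 -> 0 < L1 -> 2 * y * L1 <= 1 -> 0 <= nu -> nu <= 1 ->
  0 <= d -> 3/4 * d <= a ->
  - (y * a) + (L0 + L1 * d) / 2 * (y * nu) ^+ 2 <= - (y / 2 * d) + y / 4 * (L0 / L1).
Proof.
move=> y0 L00 L10 yL nu0 nu1 d0 ad.
set k := L0 / L1.
have k0 : 0 <= k by rewrite /k divr_ge0 // ltW.
have hL0 : L0 = k * L1 by rewrite /k mulfVK // gt_eqF.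
rewrite hL0.
have h1 : (y * nu) ^+ 2 <= y ^+ 2.
  apply: lerXn2r; rewrite ?nnegrE.
  - exact: mulr_ge0 (ltW y0) nu0.
  - exact: ltW y0.
  - exact: ler_piMr (ltW y0) nu1.
have h2 : 0 <= (k * L1 + L1 * d) / 2 by apply: divr_ge0 => //; apply: addr_ge0; apply: mulr_ge0 => //; apply: ltW.
have h3 : (k * L1 + L1 * d) / 2 * (y * nu) ^+ 2 <= (k * L1 + L1 * d) / 2 * y ^+ 2 by apply: ler_wpM2l.
suff : - (y * a) + (k * L1 + L1 * d) / 2 * y ^+ 2 <= - (y / 2 * d) + y / 4 * k by lra.
rewrite expr2.
have e1 : 0 <= y * k * (1 - 2 * y * L1) by rewrite mulr_ge0 ?subr_ge0 // mulr_ge0 // ltW.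
have e2 : 0 <= y * d * (1 - 2 * y * L1) by rewrite mulr_ge0 ?subr_ge0 // mulr_ge0 // ltW.
have e3 : y * (3/4 * d) <= y * a by rewrite ler_pM2l.
nra.
Qed.
Lemma norm0 (R : realType) p q (N : 'M[R]_(p, q) -> R) : is_norm N -> N 0 = 0.
Proof.
case=> _ _ hs _. have := hs 0 0. by rewrite scale0r normr0 mul0r.
Qed.

Lemma dual_approx (R : realType) p q (N : 'M[R]_(p, q) -> R) (G : 'M[R]_(p, q)) :
  is_norm N ->
  0 <= dual_norm N G /\
  exists D, N D <= 1 /\ 3/4 * dual_norm N G <= mxinner G D.
Proof.
move=> hN.
rewrite /dual_norm; set E := (X in sup X).
have E0 : E 0.
  rewrite /E /=; exists 0; rewrite norm0 // ler01; split => //.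
  by rewrite /mxinner mulmx0 mxtrace0.
have [hs|hns] := pselect (has_sup E); last first.
  rewrite sup_out // mulr0; split => //.
  by exists 0; rewrite norm0 // ler01 /mxinner mulmx0 mxtrace0.
have d0 : 0 <= sup E by exact: sup_upper_bound.
rewrite /dual_norm -/E; split => //.
have [->|dpos] := eqVneq (sup E) 0.
  by exists 0; rewrite norm0 // ler01 /mxinner mulmx0 mxtrace0 mulr0.
have dp : 0 < sup E by rewrite lt_def dpos d0.
have [e [D [ND ->]] he] := sup_adherent (divr_gt0 dp (ltr0n R 4)) hs.
exists D; split => //. lra.
Qed.

Lemma bigmax_ge (R : realType) (I : finType) (P : pred I) (F : I -> R) i :
  P i -> F i <= \big[Num.max/0]_(j | P j) F j.
Proof.
move=> Pi; rewrite unlock.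
have : i \in index_enum I by rewrite mem_index_enum.
elim: (index_enum I) => //= j r IH.
rewrite inE => /orP [/eqP <- | ir].
  by rewrite Pi le_max lexx.
case: (P j); last by apply: IH.
by rewrite le_max IH // orbT.
Qed.

Lemma bigmax_ge0 (R : realType) (I : finType) (P : {pred I}) (F : I -> R) :
  0 <= \big[Num.max/0]_(j in P) F j.
Proof.
apply: (big_rec (fun x => 0 <= x)) => //.
by move=> i x _ hx; rewrite le_max hx orbT.
Qed.

Local Unset Implicit Arguments.

Theorem lemma12 (R : realType) (b : nat) (m n : 'I_b -> nat)
  (N : forall i : 'I_b, 'M[R]_(m i, n i) -> R)
  (f : blocks R m n -> R) (gradf : blocks R m n -> blocks R m n) (fstar : R)
  (D : {set 'I_b} -> R) (L0 L1 : 'I_b -> {set 'I_b} -> R) :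
  (forall i, is_norm (N i)) ->
  C1_with_gradient f gradf ->
  (forall X, fstar <= f X) ->
  is_distribution D ->
  (forall i S, 0 <= L0 i S) -> (forall i S, 0 <= L1 i S) ->
  (forall S, in_supp D S -> forall (X G : blocks R m n),
     (forall i, i \notin S -> G i = 0) ->
     f (badd X G) - f X - binner (gradf X) G <=
       \sum_(i in S) (L0 i S + L1 i S * dual_norm (N i) (gradf X i)) / 2
                       * N i (G i) ^+ 2) ->
  forall S : {set 'I_b}, in_supp D S ->
  (forall i, i \in S -> 0 < L1 i S) ->
  forall x : 'I_b -> R, (forall i, 0 < x i) ->
  forall X : blocks R m n,
    \sum_(i in S) x i * dual_norm (N i) (gradf X i)
    <= 4 * (\big[Num.max/0]_(i in S) (x i * L1 i S)) * (f X - fstar)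
       + \sum_(i in S) x i * L0 i S / L1 i S.
Proof.
move=> hN _ hf _ hL0 hL1 hsm S hS hL1S x hx X.
set M := \big[Num.max/0]_(i in S) (x i * L1 i S).
have M0 : 0 <= M by exact: bigmax_ge0.
have B0 : 0 <= \sum_(i in S) x i * L0 i S / L1 i S.
  apply: sumr_ge0 => i iS; apply: divr_ge0; last exact: hL1.
  by apply: mulr_ge0 => //; apply: ltW.
have F0 : 0 <= f X - fstar by rewrite subr_ge0.
have [S0|[i0 i0S]] := set_0Vmem S.
  by rewrite /M S0 !big_set0; lra.
have Mp : 0 < M.
  apply: lt_le_trans (@bigmax_ge R _ (fun j => j \in S) (fun j => x j * L1 j S) i0 i0S).
  by apply: mulr_gt0 => //; apply: hL1S.
set c := (2 * M)^-1.
have cM : c * M = 1/2 by rewrite /c invfM -mulrA mulVf ?gt_eqF // mulr1 div1r.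
have c0 : 0 < c by rewrite /c invr_gt0 mulr_gt0.
pose d i := dual_norm (N i) (gradf X i).
have hD : forall i, exists Di, N i Di <= 1 /\ 3/4 * d i <= mxinner (gradf X i) Di.
  by move=> i; case: (dual_approx (gradf X i) (hN i)).
have d0 : forall i, 0 <= d i by move=> i; case: (dual_approx (gradf X i) (hN i)).
pose Dv i := projT1 (cid (hD i)).
have hDv : forall i, N i (Dv i) <= 1 /\ 3/4 * d i <= mxinner (gradf X i) (Dv i).
  by move=> i; rewrite /Dv; case: (cid (hD i)).
pose G : blocks R m n := fun i => if i \in S then (- (c * x i)) *: Dv i else 0.
have hG : forall i, i \notin S -> G i = 0 by move=> i /negbTE ni; rewrite /G ni.
have H := hsm S hS X G hG.
have hbin : binner (gradf X) G = \sum_(i in S) - (c * x i * mxinner (gradf X i) (Dv i)).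
  rewrite /binner [RHS]big_mkcond; apply: eq_bigr => i _; rewrite /G.
  case: ifP => _; last by rewrite /mxinner mulmx0 mxtrace0.
  by rewrite /mxinner -scalemxAr mxtraceZ mulNr.
have hrhs : \sum_(i in S) (L0 i S + L1 i S * dual_norm (N i) (gradf X i)) / 2 * N i (G i) ^+ 2
   <= \sum_(i in S) (- (- (c * x i * mxinner (gradf X i) (Dv i)))
          + (- (c * x i / 2 * d i) + c * x i / 4 * (L0 i S / L1 i S))).
  apply: ler_sum => i iS.
  have y0 : 0 < c * x i by rewrite mulr_gt0.
  have yL : 2 * (c * x i) * L1 i S <= 1.
    have := @bigmax_ge R _ (fun j => j \in S) (fun j => x j * L1 j S) i iS.
    rewrite -/M => hM.
    have := ler_wpM2l (ltW c0) hM.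
    rewrite cM !mulrA => h; lra.
  have [nu1 ad] := hDv i.
  have nu0 : 0 <= N i (Dv i) by case: (hN i).
  have := @per_i R (c * x i) (L0 i S) (L1 i S) (N i (Dv i)) (mxinner (gradf X i) (Dv i)) (d i) y0 (hL0 i S) (hL1S i iS) yL nu0 nu1 (d0 i) ad.
  have -> : N i (G i) = c * x i * N i (Dv i).
    rewrite /G iS; case: (hN i) => _ _ hs _; rewrite hs normrN gtr0_norm //.
  rewrite opprK. rewrite /d. lra.
set A := \sum_(i in S) x i * dual_norm (N i) (gradf X i).
set B := \sum_(i in S) x i * L0 i S / L1 i S.
have eR : \sum_(i in S) (- (- (c * x i * mxinner (gradf X i) (Dv i)))
          + (- (c * x i / 2 * d i) + c * x i / 4 * (L0 i S / L1 i S)))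
   = \sum_(i in S) (c * x i * mxinner (gradf X i) (Dv i)) - (c / 2 * A) + c / 4 * B.
  rewrite big_split /= big_split /= !sumrN opprK /A /B !mulr_sumr.
  rewrite -addrA; congr (_ + (- _ + _)); apply: eq_bigr => i _; rewrite ?/d; ring.
rewrite eR in hrhs.
rewrite hbin sumrN in H.
have := hf (badd X G).
move=> hfs.
have H2 := le_trans H hrhs.
move: H2 hfs; set s1 := \sum_(i in S) c * x i * _; set fg := f _.
move=> H2 hfs.
have h1 : fstar - f X <= - (c / 2 * A) + c / 4 * B by lra.
have h2 := ler_wpM2l (ltW Mp) h1.
have e3 : M * (- (c / 2 * A) + c / 4 * B) = - (c * M) / 2 * A + (c * M) / 4 * B by ring.
rewrite e3 cM in h2.
have e4 : 4 * M * (f X - fstar) = - (4 * (M * (fstar - f X))) by ring.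
rewrite e4; move: h2; set P := M * (fstar - f X) => h2.
have B0' : 0 <= B by []. clear - h2 B0'.
lra.
Qed.
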